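(* Let $R$ be an associative unital division ring over a field $F$ of characteristic $0$, let $\alpha\in R$, $q\in F\setminus\{0\}$, $\alpha_M=\alpha q^M$, and let $N\geq4$. Let $y_M\in R$ ($M\in\mathbb{Z}$) be invertible and satisfy for all $M\in\mathbb{Z}$ $$y_{M+N}=\alpha_My_{M+1}+y_{M+2}\bigl(y_M^{-1}-y_{M+N-1}^{-1}\alpha_{M-1}\bigr)y_{M+N-2}.$$ In products $\prod_{k=a}^{b}c_k:=c_ac_{a+1}\cdots c_b$ (factors ordered by increasing $k$). (a) If $N$ is even, then $u_M:=y_{M+3}y_{M+2}^{-1}$ satisfies for all $M$ $$u_{M+N-3}u_{M+N-4}-u_{M-1}u_{M-2}=\alpha_M\prod_{k=0}^{N-4}u_{M+k-1}^{-1}-\Bigl(\prod_{k=0}^{N-4}u_{M+k}^{-1}\Bigr)\alpha_{M-1}.$$ (b) If $N\geq5$ is odd and $K=\lfloor N/2\rfloor$, then $u_M:=y_{M+4}y_{M+2}^{-1}$ satisfies for all $M$ $$\prod_{k=1-K}^{0}u_{M-2k-1}-u_{M-2}\prod_{k=2-K}^{0}u_{M-2k-1}=\alpha_M-\Bigl(\prod_{k=0}^{K-2}u_{M+2k}^{-1}\Bigr)\alpha_{M-1}\prod_{k=2-K}^{0}u_{M-2k-1}.$$ *)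

(* Defs.v *)
From HB Require Import structures.
From mathcomp Require Import all_boot all_order all_algebra.
Set Implicit Arguments. Unset Strict Implicit. Unset Printing Implicit Defensive.
Import Order.TTheory GRing.Theory Num.Theory.
Local Open Scope ring_scope.

Definition alphaM (F : fieldType) (R : unitAlgType F) (alpha : R) (q : F)
  (M : int) : R := (q ^ M) *: alpha.

Definition iprod (R : unitRingType) (a b : int) (c : int -> R) : R :=
  if (a <= b)%R then \prod_(0 <= j < (`|(b - a + 1)%R|)%N) c (a + j%:Z) else 1.

(* Main.v *)
Require Import Defs.
From HB Require Import structures.
From mathcomp Require Import all_boot all_order all_algebra.
From mathcomp Require Import zify.
Import Order.TTheory GRing.Theory Num.Theory.
Local Open Scope ring_scope.

Lemma tel (R : unitRingType) (f : int -> R) (s : nat -> int) (c : nat -> R) n :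
  (forall m, f m \is a GRing.unit) ->
  (forall j, c j = f (s j) * (f (s j.+1))^-1) ->
  \prod_(0 <= j < n) c j = f (s 0%N) * (f (s n))^-1.
Proof.
move=> hu hc; elim: n => [|n IH]; first by rewrite big_geq // divrr.
by rewrite big_nat_recr //= IH hc mulrA mulrVK.
Qed.

Arguments tel {R f} s {c n} _ _.

Lemma iprodE (R : unitRingType) (a b : int) (c : int -> R) (n : nat) :
  b - a + 1 = n%:Z -> iprod a b c = \prod_(0 <= j < n) c (a + j%:Z).
Proof.
move=> e; rewrite /iprod e absz_nat; case: ifP => // h.
have -> : n = 0%N by lia.
by rewrite big_geq.
Qed.

Arguments iprodE {R a b c} n _.

Lemma invq (R : unitRingType) (a b : R) : a \is a GRing.unit -> b \is a GRing.unit ->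
  (a * b^-1)^-1 = b * a^-1.
Proof. by move=> ha hb; rewrite invrM ?unitrV // invrK. Qed.

Lemma canc (R : unitRingType) (a b c : R) : b \is a GRing.unit ->
  (a * b^-1) * (b * c) = a * c.
Proof. by move=> hb; rewrite mulrA mulrVK. Qed.

Lemma zl (V : zmodType) (x p r : V) : x + (p - r) - p = x - r.
Proof. by rewrite [p - r]addrC addrA addrK. Qed.

Theorem proposition6p8 (F : fieldType) (R : unitAlgType F)
  (hchar : [pchar F] =i pred0)
  (hdiv : forall x : R, x != 0 -> x \is a GRing.unit)
  (alpha : R) (q : F) (hq : q != 0) (N : nat) (hN : (4 <= N)%N)
  (y : int -> R) (hy : forall M : int, y M \is a GRing.unit)
  (hrec : forall M : int,
     y (M + N%:Z) = alphaM alpha q M * y (M + 1)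
       + y (M + 2) * ((y M)^-1 - (y (M + N%:Z - 1))^-1 * alphaM alpha q (M - 1))
         * y (M + N%:Z - 2)) :
  (~~ odd N ->
     let u := fun M : int => y (M + 3) * (y (M + 2))^-1 in
     forall M : int,
       u (M + N%:Z - 3) * u (M + N%:Z - 4) - u (M - 1) * u (M - 2)
       = alphaM alpha q M * iprod 0 (N%:Z - 4) (fun k => (u (M + k - 1))^-1)
         - iprod 0 (N%:Z - 4) (fun k => (u (M + k))^-1) * alphaM alpha q (M - 1))
  /\
  ((5 <= N)%N -> odd N ->
     let K : int := (N./2)%:Z in
     let u := fun M : int => y (M + 4) * (y (M + 2))^-1 in
     forall M : int,
       iprod (1 - K) 0 (fun k => u (M - 2 * k - 1))
         - u (M - 2) * iprod (2 - K) 0 (fun k => u (M - 2 * k - 1))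
       = alphaM alpha q M
         - iprod 0 (K - 2) (fun k => (u (M + 2 * k))^-1) * alphaM alpha q (M - 1)
           * iprod (2 - K) 0 (fun k => u (M - 2 * k - 1))).
Proof.
have key : forall M, y (M + N%:Z) * (y (M + N%:Z - 2))^-1 - y (M + 2) * (y M)^-1 =
   alphaM alpha q M * (y (M + 1) * (y (M + N%:Z - 2))^-1)
   - y (M + 2) * (y (M + N%:Z - 1))^-1 * alphaM alpha q (M - 1).
  move=> M; rewrite hrec mulrDl mulrK // mulrBr !mulrA.
  by rewrite zl.
split.
  move=> _ u M.
  rewrite (iprodE (N - 3)%N); last by lia.
  rewrite (iprodE (N - 3)%N); last by lia.
  rewrite (@tel _ y (fun j => M + 1 + j%:Z)) //; last first.
    by move=> j; rewrite /u invq // -!addrA; congr (y _ * (y _)^-1); lia.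
  rewrite (@tel _ y (fun j => M + 2 + j%:Z)) //; last first.
    by move=> j; rewrite /u invq // -!addrA; congr (y _ * (y _)^-1); lia.
  have e1 : u (M + N%:Z - 3) * u (M + N%:Z - 4) = y (M + N%:Z) * (y (M + N%:Z - 2))^-1.
    rewrite /u (_ : M + N%:Z - 3 + 2 = M + N%:Z - 4 + 3); last by lia.
    rewrite canc //; congr (y _ * (y _)^-1); lia.
  have e2 : u (M - 1) * u (M - 2) = y (M + 2) * (y M)^-1.
    rewrite /u (_ : M - 1 + 2 = M - 2 + 3); last by lia.
    rewrite canc //; congr (y _ * (y _)^-1); lia.
  rewrite e1 e2 key; congr (_ * (y _ * (y _)^-1) - y _ * (y _)^-1 * _); lia.
move=> h5 hodd K u M.
have hK : N%:Z = 2 * K + 1.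
  rewrite /K; have := odd_double_half N; rewrite hodd -muln2; lia.
have hK2 : (2 <= K)%R by lia.
rewrite (@iprodE _ (1 - K) _ _ `|K|%N); last by lia.
rewrite (@iprodE _ (2 - K) _ _ `|K - 1|%N); last by lia.
rewrite (@iprodE _ 0 _ _ `|K - 1|%N); last by lia.
rewrite (@tel _ y (fun j => M + 2 * K + 1 - 2 * j%:Z)) //; last first.
  by move=> j; rewrite /u; congr (y _ * (y _)^-1); lia.
rewrite (@tel _ y (fun j => M + 2 * K - 1 - 2 * j%:Z)) //; last first.
  by move=> j; rewrite /u; congr (y _ * (y _)^-1); lia.
rewrite (@tel _ y (fun j => M + 2 + 2 * j%:Z)) //; last first.
  by move=> j; rewrite /u invq //; congr (y _ * (y _)^-1); lia.
have -> : u (M - 2) = y (M + 2) / y M by rewrite /u; congr (y _ / y _); lia.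
have := key M.
rewrite (_ : M + 2 * K + 1 - 2 * 0%Z = M + N%:Z); last by lia.
rewrite (_ : M + 2 * K + 1 - 2 * (`|K|%N)%:Z = M + 1); last by lia.
rewrite (_ : M + 2 * K - 1 - 2 * 0%Z = M + N%:Z - 2); last by lia.
rewrite (_ : M + 2 * K - 1 - 2 * (`|(K - 1)%R|%N)%:Z = M + 1); last by lia.
rewrite (_ : M + 2 + 2 * 0%Z = M + 2); last by lia.
rewrite (_ : M + 2 + 2 * (`|(K - 1)%R|%N)%:Z = M + N%:Z - 1); last by lia.
move=> /(congr1 (fun t => t * (y (M + N%:Z - 2) / y (M + 1)))).
rewrite !mulrBl canc // => ->.
by rewrite -[alphaM _ _ _ * _ * _]mulrA canc // divrr // mulr1.
Qed.
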